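(* Let $L > 0$ and let $\alpha, \beta : \mathbb{R} \to \mathbb{R}^2$ be smooth $L$-periodic maps such that $\alpha'(s) \neq 0$ for all $s$, and \[ \langle \beta, \alpha' \rangle = 0, \qquad |\alpha'|^2 + |\beta|^2 = 1 \quad \text{on } \mathbb{R}. \] Set $a = \alpha' + \beta$ and $b = \alpha' - \beta$. Then there exist $s, r \in \mathbb{R}$ such that $a(s) + b(r) = 0$.
   Context: $\langle\cdot,\cdot\rangle$ and $|\cdot|$ are the Euclidean inner product and norm on $\mathbb{R}^2$. Note that $|a| = |b| = 1$. *)

(* Defs.v *)
From Stdlib Require Import Reals.
From Coquelicot Require Import Coquelicot.
Open Scope R_scope.

Definition vec := (R * R)%type.

Definition vadd (u v : vec) : vec := (fst u + fst v, snd u + snd v).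
Definition vsub (u v : vec) : vec := (fst u - fst v, snd u - snd v).
Definition inner (u v : vec) : R := fst u * fst v + snd u * snd v.
Definition vnorm (u : vec) : R := sqrt (inner u u).

Definition smooth (f : R -> R) : Prop := forall (n : nat) (x : R), ex_derive_n f n x.

Definition smooth2 (f : R -> vec) : Prop :=
  smooth (fun t => fst (f t)) /\ smooth (fun t => snd (f t)).

Definition periodic2 (L : R) (f : R -> vec) : Prop := forall x, f (x + L) = f x.

Definition deriv2 (f : R -> vec) (s : R) : vec :=
  (Derive (fun t => fst (f t)) s, Derive (fun t => snd (f t)) s).

(* Main.v *)
Require Import Defs.
From Stdlib Require Import Reals Lra Psatz Classical.
From Coquelicot Require Import Coquelicot.
Open Scope R_scope.

Lemma dt_facts (x1 x2 p1 p2 : R) :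
  x1^2 + x2^2 = 1 -> p1^2 + p2^2 = 1 -> 1 - (x1*p1 + x2*p2) <> 0 ->
  let d := 1 - (x1*p1 + x2*p2) in
  let q := - x1 * p2 + x2 * p1 in
  let t := q / d in
  d * t^2 = 2 - d /\ d * t = q.
Proof.
  intros hx hp hd d q t.
  assert (e2 : d * t = q) by (unfold t; field; exact hd).
  split; [|exact e2].
  assert (hq : q^2 = d * (2 - d)).
  { unfold q, d. nra. }
  apply (Rmult_eq_reg_l d); [|exact hd].
  replace (d * (d * t^2)) with ((d*t)^2) by ring. rewrite e2. rewrite hq. ring.
Qed.

Lemma dpos (x1 x2 p1 p2 : R) :
  x1^2 + x2^2 = 1 -> p1^2 + p2^2 = 1 -> (x1 <> p1 \/ x2 <> p2) ->
  0 < 1 - (x1*p1 + x2*p2).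
Proof.
  intros hx hp [h|h].
  - assert (0 < (x1-p1)^2) by (apply pow2_gt_0; lra). nra.
  - assert (0 < (x2-p2)^2) by (apply pow2_gt_0; lra). nra.
Qed.

Lemma inj_t (x1 x2 y1 y2 p1 p2 : R) :
  x1^2 + x2^2 = 1 -> y1^2 + y2^2 = 1 -> p1^2 + p2^2 = 1 ->
  0 < 1 - (x1*p1 + x2*p2) -> 0 < 1 - (y1*p1 + y2*p2) ->
  (- x1 * p2 + x2 * p1) / (1 - (x1*p1 + x2*p2)) =
  (- y1 * p2 + y2 * p1) / (1 - (y1*p1 + y2*p2)) ->
  x1 = y1 /\ x2 = y2.
Proof.
  intros hx hy hp dx dy ht.
  destruct (dt_facts x1 x2 p1 p2 hx hp ltac:(lra)) as [ex1 ex2].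
  destruct (dt_facts y1 y2 p1 p2 hy hp ltac:(lra)) as [ey1 ey2].
  cbv zeta in *. rewrite ht in ex1, ex2.
  set (t := (- y1 * p2 + y2 * p1) / (1 - (y1*p1 + y2*p2))) in *.
  assert (hd : 1 - (x1*p1 + x2*p2) = 1 - (y1*p1 + y2*p2)).
  { assert (0 <= t^2) by nra.
    assert ((1 - (x1*p1 + x2*p2)) * (t^2+1) = (1 - (y1*p1 + y2*p2)) * (t^2+1)) by nra.
    apply Rmult_eq_reg_r in H0; lra. }
  rewrite hd in ex2. rewrite ey2 in ex2.
  assert (x1 = (x1*p1+x2*p2)*p1 - (-x1*p2+x2*p1)*p2) by (transitivity (x1*(p1^2+p2^2)); [rewrite hp; ring | ring]).
  assert (x2 = (x1*p1+x2*p2)*p2 + (-x1*p2+x2*p1)*p1) by (transitivity (x2*(p1^2+p2^2)); [rewrite hp; ring | ring]).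
  assert (y1 = (y1*p1+y2*p2)*p1 - (-y1*p2+y2*p1)*p2) by (transitivity (y1*(p1^2+p2^2)); [rewrite hp; ring | ring]).
  assert (y2 = (y1*p1+y2*p2)*p2 + (-y1*p2+y2*p1)*p1) by (transitivity (y2*(p1^2+p2^2)); [rewrite hp; ring | ring]).
  split.
  - rewrite H, H1. replace (x1*p1+x2*p2) with (y1*p1+y2*p2) by lra. rewrite <- ex2. ring.
  - rewrite H0, H2. replace (x1*p1+x2*p2) with (y1*p1+y2*p2) by lra. rewrite <- ex2. ring.
Qed.

Lemma key_id (x1 x2 p1 p2 n1 n2 : R) :
  x1^2 + x2^2 = 1 -> p1^2 + p2^2 = 1 -> 1 - (x1*p1 + x2*p2) <> 0 ->
  let up := (1 - n1*n2)/2 in let uq := -(n1+n2)/2 in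
  let K := (-1 - n1*n2)/2 in
  let t := (- x1 * p2 + x2 * p1) / (1 - (x1*p1 + x2*p2)) in
  x1 * (up*p1 - uq*p2) + x2 * (up*p2 + uq*p1) - K =
  (1 - (x1*p1 + x2*p2)) / 2 * ((t - n1) * (t - n2)).
Proof.
  intros hx hp hd up uq K t.
  destruct (dt_facts x1 x2 p1 p2 hx hp hd) as [e1 e2]. cbv zeta in *.
  fold t in e1, e2.
  set (d := 1 - (x1*p1 + x2*p2)) in *.
  replace (d / 2 * ((t - n1) * (t - n2))) with
    ((d * t^2 - (n1+n2)*(d*t) + n1*n2*d)/2) by (field).
  rewrite e1, e2. unfold up, uq, K, d. field.
Qed.

Lemma core (L : R) (a1 a2 c1 c2 : R -> R) :
  0 <= L ->
  (forall s, continuity_pt a1 s) -> (forall s, continuity_pt a2 s) ->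
  (forall s, a1 s ^ 2 + a2 s ^ 2 = 1) -> (forall s, c1 s ^ 2 + c2 s ^ 2 = 1) ->
  (forall s r, a1 s <> c1 r \/ a2 s <> c2 r) ->
  exists u1 u2, forall s, 0 <= s <= L -> (a1 s - c1 s) * u1 + (a2 s - c2 s) * u2 < 0.
Proof.
  intros hL ca1 ca2 ua uc H.
  set (p1 := c1 0). set (p2 := c2 0).
  assert (hp : p1^2 + p2^2 = 1) by apply uc.
  assert (da : forall s, 0 < 1 - (a1 s * p1 + a2 s * p2)).
  { intro s. apply dpos; [apply ua|exact hp|apply H]. }
  set (T := fun s => (- a1 s * p2 + a2 s * p1) / (1 - (a1 s * p1 + a2 s * p2))).
  assert (cT : forall s, continuity_pt T s).
  { intro s. unfold T. apply continuity_pt_div.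
    - apply continuity_pt_plus; apply continuity_pt_mult;
        try (apply continuity_pt_const; intros ? ?; reflexivity); auto.
      apply continuity_pt_opp; auto.
    - apply continuity_pt_minus; [apply continuity_pt_const; intros ? ?; reflexivity|].
      apply continuity_pt_plus; apply continuity_pt_mult; auto;
        apply continuity_pt_const; intros ? ?; reflexivity.
    - specialize (da s). lra. }
  destruct (continuity_ab_min T 0 L hL (fun c _ => cT c)) as [s1 [hs1 hs1L]].
  destruct (continuity_ab_maj T 0 L hL (fun c _ => cT c)) as [s2 [hs2 hs2L]].
  set (n1 := T s1). set (n2 := T s2).
  assert (n12 : n1 <= n2) by (apply hs2; lra).
  set (up := (1 - n1*n2)/2). set (uq := -(n1+n2)/2). set (K := (-1 - n1*n2)/2).
  exists (up*p1 - uq*p2), (up*p2 + uq*p1).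
  intros s hs.
  assert (fa : a1 s * (up*p1 - uq*p2) + a2 s * (up*p2 + uq*p1) - K <= 0).
  { pose proof (key_id (a1 s) (a2 s) p1 p2 n1 n2 (ua s) hp ltac:(specialize (da s); lra)) as E.
    cbv zeta in E. fold up uq K in E. rewrite E.
    fold (T s). specialize (hs1 s hs). specialize (hs2 s hs). fold n1 in hs1. fold n2 in hs2.
    specialize (da s).
    assert ((T s - n1) * (T s - n2) <= 0) by nra.
    assert (0 <= (1 - (a1 s * p1 + a2 s * p2)) / 2) by lra. nra. }
  assert (fc : 0 < c1 s * (up*p1 - uq*p2) + c2 s * (up*p2 + uq*p1) - K).
  { destruct (classic (c1 s <> p1 \/ c2 s <> p2)) as [hne|heq].
    2:{ assert (c1 s = p1) by (apply NNPP; tauto). assert (c2 s = p2) by (apply NNPP; tauto).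
        rewrite H0, H1. unfold up, uq, K.
        match goal with |- 0 < ?X => replace X with ((1 - n1*n2)/2*(p1^2+p2^2) - (-1 - n1*n2)/2) by ring end.
        rewrite hp; lra. }
    pose proof (dpos _ _ _ _ (uc s) hp hne) as dc.
    pose proof (key_id (c1 s) (c2 s) p1 p2 n1 n2 (uc s) hp ltac:(lra)) as E.
    cbv zeta in E. fold up uq K in E. rewrite E.
    set (t := (- c1 s * p2 + c2 s * p1) / (1 - (c1 s * p1 + c2 s * p2))).
    destruct (Rle_lt_dec n1 t) as [h1|h1]; [destruct (Rle_lt_dec t n2) as [h2|h2]|].
    - exfalso.
      assert (cont : continuity T) by (intro; apply cT).
      assert (hy : Rmin (T s1) (T s2) <= t <= Rmax (T s1) (T s2)).
      { rewrite Rmin_left, Rmax_right; fold n1 n2; lra. }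
      destruct (IVT_gen T s1 s2 t cont hy) as [x [hx Tx]].
      unfold T in Tx.
      destruct (inj_t _ _ _ _ p1 p2 (ua x) (uc s) hp (da x) dc Tx) as [e1 e2].
      destruct (H x s); contradiction.
    - assert (0 < (t - n1) * (t - n2)) by nra.
      apply Rmult_lt_0_compat; lra.
    - assert (0 < (t - n1) * (t - n2)) by nra.
      apply Rmult_lt_0_compat; lra. }
  lra.
Qed.

Lemma cont_of_smooth (f : R -> R) : smooth f -> forall s, continuity_pt f s.
Proof.
  intros hf s. apply continuity_pt_filterlim. exact (ex_derive_continuous f s (hf 1%nat s)).
Qed.

Lemma cont_of_smooth_D (f : R -> R) : smooth f -> forall s, continuity_pt (Derive f) s.
Proof.
  intros hf s. apply continuity_pt_filterlim. exact (ex_derive_continuous (Derive f) s (hf 2%nat s)).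
Qed.

Theorem lemma2p2 (L : R) (alpha beta : R -> vec) :
  0 < L ->
  smooth2 alpha -> smooth2 beta ->
  periodic2 L alpha -> periodic2 L beta ->
  (forall s, deriv2 alpha s <> (0, 0)) ->
  (forall s, inner (beta s) (deriv2 alpha s) = 0) ->
  (forall s, vnorm (deriv2 alpha s) ^ 2 + vnorm (beta s) ^ 2 = 1) ->
  let a := fun s => vadd (deriv2 alpha s) (beta s) in
  let b := fun s => vsub (deriv2 alpha s) (beta s) in
  exists s r : R, vadd (a s) (b r) = (0, 0).
Proof.
  intros hL [sa1 sa2] [sb1 sb2] pa pb _ horth hnorm a b.
  destruct (classic (exists s r : R, vadd (a s) (b r) = (0, 0))) as [h|Hn]; [exact h|exfalso].
  set (A1 := Derive (fun t => fst (alpha t))). set (A2 := Derive (fun t => snd (alpha t))).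
  set (B1 := fun t => fst (beta t)). set (B2 := fun t => snd (beta t)).
  assert (hun : forall s, A1 s ^2 + A2 s ^2 + B1 s ^2 + B2 s ^2 = 1 /\ B1 s * A1 s + B2 s * A2 s = 0).
  { intro s. specialize (hnorm s). specialize (horth s).
    unfold vnorm in hnorm. rewrite !pow2_sqrt in hnorm by (unfold inner; apply Rplus_le_le_0_compat; apply Rle_0_sqr).
    unfold inner, deriv2 in *. simpl in *. split; [unfold A1, A2, B1, B2; nra| exact horth]. }
  destruct (core L (fun s => A1 s + B1 s) (fun s => A2 s + B2 s)
                   (fun s => B1 s - A1 s) (fun s => B2 s - A2 s)) as [u1 [u2 Hu]].
  - lra.
  - intro s. apply continuity_pt_plus; [apply cont_of_smooth_D, sa1| apply cont_of_smooth, sb1].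
  - intro s. apply continuity_pt_plus; [apply cont_of_smooth_D, sa2| apply cont_of_smooth, sb2].
  - intro s. destruct (hun s). nra.
  - intro s. destruct (hun s). nra.
  - intros s r. apply NNPP. intro hc. apply Hn. exists s, r.
    assert (e1 : A1 s + B1 s = B1 r - A1 r) by (apply NNPP; tauto).
    assert (e2 : A2 s + B2 s = B2 r - A2 r) by (apply NNPP; tauto).
    unfold a, b, vadd, vsub, deriv2. simpl. fold A1 A2.
    unfold B1, B2 in e1, e2. f_equal; lra.
  - set (g := fun t => fst (alpha t) * u1 + snd (alpha t) * u2).
    assert (dg : forall x, is_derive g x (A1 x * u1 + A2 x * u2)).
    { intro x. unfold g.
      apply (is_derive_plus (fun t => fst (alpha t) * u1) (fun t => snd (alpha t) * u2)).
      - apply (is_derive_scal_l (fun t => fst (alpha t)) x (A1 x) u1).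
        apply Derive_correct. exact (sa1 1%nat x).
      - apply (is_derive_scal_l (fun t => snd (alpha t)) x (A2 x) u2).
        apply Derive_correct. exact (sa2 1%nat x). }
    destruct (MVT_gen g 0 L (fun x => A1 x * u1 + A2 x * u2)) as [c [hc e]].
    + intros x _. apply dg.
    + intros x _. apply continuity_pt_filterlim. exact (ex_derive_continuous g x (ex_intro _ _ (dg x))).
    + rewrite Rmin_left, Rmax_right in hc by lra.
      assert (gp : g L = g 0).
      { unfold g. pose proof (pa 0) as p0. rewrite Rplus_0_l in p0. rewrite p0. reflexivity. }
      specialize (Hu c hc). rewrite gp in e.
      assert (A1 c * u1 + A2 c * u2 < 0) by lra.
      assert (0 < L - 0) by lra. nra.
Qed.
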